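(* Let $x\in\mathbb R^N$ with block structure $\mathcal B=(\mathcal B_1,\dots,\mathcal B_B)$, weights $\omega_b\ge1$, $0<p\le 2$, and a block norm $\|\cdot\|_q$. For every $s\ge\|\omega\|_\infty^2$, $$\widetilde\sigma_{3s}(x)_{q,p}^{(\omega)}\le\sigma_s(x)_{q,p}^{(\omega)}.$$
   Context: Block structure: $\mathcal B=(\mathcal B_1,\dots,\mathcal B_B)$ is a partition of $\{1,\dots,N\}$; for $x\in\mathbb R^N$, $x[b]=x[\mathcal B_b]$; for $S\subseteq\{1,\dots,B\}$, $x[S]$ equals $x$ on blocks in $S$ and $0$ elsewhere. Weights $\omega_b\ge1$, $\|\omega\|_\infty=\max_b\omega_b$, $\omega(S)=\sum_{b\in S}\omega_b^2$. $\|x\|_{q,p}^{(\omega)}=\big(\sum_b\omega_b^{2-p}\|x[b]\|_q^p\big)^{1/p}$. $\|x\|_0^{(\omega)}=\omega(\{b:x[b]\ne0\})$. $\sigma_s(x)_{q,p}^{(\omega)}=\inf\{\|x-z\|_{q,p}^{(\omega)}:\|z\|_0^{(\omega)}\le s\}$. Quasi-best approximation: let $\pi$ be a permutation of $\{1,\dots,B\}$ with $\|x[\pi(i)]\|_q/\omega_{\pi(i)}$ nonincreasing in $i$; for $t\ge\|\omega\|_\infty^2$ let $k_t=\max\{k:\sum_{i=1}^k\omega_{\pi(i)}^2\le t\}$, $S_t=\{\pi(1),\dots,\pi(k_t)\}$ and $\widetilde\sigma_t(x)_{q,p}^{(\omega)}=\|x-x[S_t]\|_{q,p}^{(\omega)}$.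 *)

(* Defs.v *)
From Stdlib Require Import Reals Lra Lia Arith Bool List ClassicalEpsilon.
Open Scope R_scope.

(* Vectors in R^N are functions nat -> R; only indices i < N matter.
   The block structure is given by blk : nat -> nat, blk i = b meaning
   index i lies in block B_b (b < B); blocks are nonempty. *)

Definition is_block_partition (N B : nat) (blk : nat -> nat) : Prop :=
  (forall i, (i < N)%nat -> (blk i < B)%nat) /\
  (forall b, (b < B)%nat -> exists i, (i < N)%nat /\ blk i = b).

Fixpoint sumR (n : nat) (f : nat -> R) : R :=
  match n with
  | O => 0
  | S m => sumR m f + f m
  end.

Fixpoint maxR (n : nat) (f : nat -> R) : R :=
  match n with
  | O => 0
  | S m => Rmax (maxR m f) (f m)
  end.

(* real power with the convention 0^y = 0 (used only for y > 0, x >= 0) *)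
Definition rpow (x y : R) : R :=
  if Rle_dec x 0 then 0 else Rpower x y.

(* a family of norms, one on each block: nrm b u = ||u[b]||_q *)
Definition is_block_norm (N B : nat) (blk : nat -> nat)
  (nrm : nat -> (nat -> R) -> R) : Prop :=
  forall b, (b < B)%nat ->
    (forall u v, (forall i, (i < N)%nat -> blk i = b -> u i = v i) ->
        nrm b u = nrm b v) /\
    (forall u, 0 <= nrm b u) /\
    (forall u, nrm b u = 0 <-> (forall i, (i < N)%nat -> blk i = b -> u i = 0)) /\
    (forall c u, nrm b (fun i => c * u i) = Rabs c * nrm b u) /\
    (forall u v, nrm b (fun i => u i + v i) <= nrm b u + nrm b v).

Definition restrict (blk : nat -> nat) (S : nat -> bool) (x : nat -> R) : nat -> R :=
  fun i => if S (blk i) then x i else 0.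

Definition vsub (x z : nat -> R) : nat -> R := fun i => x i - z i.

Definition mixnorm (B : nat) (nrm : nat -> (nat -> R) -> R) (omega : nat -> R)
  (p : R) (x : nat -> R) : R :=
  rpow (sumR B (fun b => rpow (omega b) (2 - p) * rpow (nrm b x) p)) (1 / p).

Definition block_nz (N : nat) (blk : nat -> nat) (x : nat -> R) (b : nat) : bool :=
  existsb (fun i => Nat.eqb (blk i) b && (if Req_EM_T (x i) 0 then false else true))
          (seq 0 N).

Definition omega_set (B : nat) (omega : nat -> R) (S : nat -> bool) : R :=
  sumR B (fun b => if S b then omega b ^ 2 else 0).

Definition wl0 (N B : nat) (blk : nat -> nat) (omega : nat -> R) (x : nat -> R) : R :=
  omega_set B omega (block_nz N blk x).

Definition omega_inf (B : nat) (omega : nat -> R) : R := maxR B omega.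

Definition is_inf (E : R -> Prop) (m : R) : Prop :=
  (forall y, E y -> m <= y) /\
  (forall m', (forall y, E y -> m' <= y) -> m' <= m).

Definition sigma_best (N B : nat) (blk : nat -> nat) (nrm : nat -> (nat -> R) -> R)
  (omega : nat -> R) (p s : R) (x : nat -> R) : R :=
  epsilon (inhabits 0)
    (is_inf (fun y => exists z : nat -> R,
                 wl0 N B blk omega z <= s /\
                 y = mixnorm B nrm omega p (vsub x z))).

Definition is_perm (B : nat) (pi : nat -> nat) : Prop :=
  (forall i, (i < B)%nat -> (pi i < B)%nat) /\
  (forall i j, (i < B)%nat -> (j < B)%nat -> pi i = pi j -> i = j).

Definition ratio_sorted (B : nat) (nrm : nat -> (nat -> R) -> R)
  (omega : nat -> R) (x : nat -> R) (pi : nat -> nat) : Prop :=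
  forall i j, (i <= j)%nat -> (j < B)%nat ->
    nrm (pi j) x / omega (pi j) <= nrm (pi i) x / omega (pi i).

(* sum_{i=1}^k omega_{pi(i)}^2 (0-based: i < k) *)
Definition prefix_w (omega : nat -> R) (pi : nat -> nat) (k : nat) : R :=
  sumR k (fun i => omega (pi i) ^ 2).

Fixpoint kmax (omega : nat -> R) (pi : nat -> nat) (t : R) (n : nat) : nat :=
  match n with
  | O => O
  | S m => if Rle_dec (prefix_w omega pi (S m)) t then S m else kmax omega pi t m
  end.

Definition k_t (B : nat) (omega : nat -> R) (pi : nat -> nat) (t : R) : nat :=
  kmax omega pi t B.

Definition S_t (B : nat) (omega : nat -> R) (pi : nat -> nat) (t : R) : nat -> bool :=
  fun b => existsb (fun i => Nat.eqb (pi i) b) (seq 0 (k_t B omega pi t)).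

Definition sigma_tilde (B : nat) (blk : nat -> nat) (nrm : nat -> (nat -> R) -> R)
  (omega : nat -> R) (p : R) (pi : nat -> nat) (t : R) (x : nat -> R) : R :=
  mixnorm B nrm omega p (vsub x (restrict blk (S_t B omega pi t) x)).

(* Main.v *)
Require Import Defs.
From Stdlib Require Import Reals Lra Lia Arith Bool List ClassicalEpsilon FinFun.
Open Scope R_scope.

Lemma sumR_ext n f g : (forall b, (b < n)%nat -> f b = g b) -> sumR n f = sumR n g.
Proof. induction n; intros H; simpl; auto. rewrite IHn by (intros; apply H; lia). rewrite H by lia. auto. Qed.

Lemma sumR_le n f g : (forall b, (b < n)%nat -> f b <= g b) -> sumR n f <= sumR n g.
Proof. induction n; intros H; simpl; [lra|]. assert (H1 := H n (Nat.lt_succ_diag_r n)).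
 assert (sumR n f <= sumR n g) by (apply IHn; intros; apply H; lia). lra. Qed.

Lemma sumR_lin n f g h c : sumR n (fun b => f b + c * g b - c * h b) = sumR n f + c * sumR n g - c * sumR n h.
Proof. induction n; simpl; [ring|]. rewrite IHn; ring. Qed.

Lemma sumR_zero n : sumR n (fun _ => 0) = 0.
Proof. induction n; simpl; [|rewrite IHn]; ring. Qed.

Lemma rpow_nonneg u y : 0 <= rpow u y.
Proof. unfold rpow. destruct (Rle_dec u 0); [lra|]. unfold Rpower. left; apply exp_pos. Qed.

Lemma rpow_zero y : rpow 0 y = 0.
Proof. unfold rpow. destruct (Rle_dec 0 0); lra. Qed.

Lemma rpow_mono u v y : 0 <= y -> 0 <= u <= v -> rpow u y <= rpow v y.
Proof. intros Hy Huv. unfold rpow. destruct (Rle_dec u 0).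
 - destruct (Rle_dec v 0); [lra|]. unfold Rpower; left; apply exp_pos.
 - destruct (Rle_dec v 0); [lra|]. apply Rle_Rpower_l; lra. Qed.

Lemma rpow_decomp w n p : 1 <= w -> 0 <= n ->
  rpow w (2 - p) * rpow n p = w ^ 2 * rpow (n / w) p.
Proof. intros Hw Hn. unfold rpow.
 destruct (Rle_dec w 0); [lra|].
 destruct (Rle_dec n 0).
 - assert (n = 0) by lra. subst. unfold Rdiv. rewrite Rmult_0_l.
   destruct (Rle_dec 0 0); lra.
 - destruct (Rle_dec (n / w) 0).
   + exfalso. assert (0 < n / w) by (apply Rdiv_lt_0_compat; lra). lra.
   + replace n with (w * (n / w)) at 1 by (field; lra).
     rewrite <- Rpower_mult_distr by lra.
     rewrite <- Rmult_assoc, <- Rpower_plus.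
     replace (2 - p + p) with (INR 2) by (simpl; ring).
     rewrite Rpower_pow by lra. ring. Qed.

Definition Sb (pi : nat -> nat) (k : nat) (b : nat) : bool :=
  existsb (fun i => Nat.eqb (pi i) b) (seq 0 k).

Lemma Sb_spec pi k b : Sb pi k b = true <-> exists i, (i < k)%nat /\ pi i = b.
Proof. unfold Sb. rewrite existsb_exists. split.
 - intros [i [Hi He]]. apply in_seq in Hi. apply Nat.eqb_eq in He. exists i; split; [lia|auto].
 - intros [i [Hi He]]. exists i. split. apply in_seq; lia. apply Nat.eqb_eq; auto. Qed.

Lemma sumR_indic B c g : (c < B)%nat ->
  sumR B (fun b => if Nat.eqb c b then g b else 0) = g c.
Proof. induction B; intros Hc; [lia|]. simpl. destruct (Nat.eq_dec c B).
 - subst. rewrite Nat.eqb_refl. rewrite (sumR_ext _ _ (fun _ => 0)). rewrite sumR_zero; ring.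
   intros b Hb. destruct (Nat.eqb B b) eqn:E; auto. apply Nat.eqb_eq in E. lia.
 - destruct (Nat.eqb c B) eqn:E. apply Nat.eqb_eq in E; lia. rewrite IHB by lia. ring. Qed.

Lemma reindex B pi g k : (k <= B)%nat -> (forall i, (i < B)%nat -> (pi i < B)%nat) ->
  (forall i j, (i < B)%nat -> (j < B)%nat -> pi i = pi j -> i = j) ->
  sumR B (fun b => if Sb pi k b then g b else 0) = sumR k (fun i => g (pi i)).
Proof. intros Hk Hr Hi. induction k.
 - simpl. apply sumR_zero.
 - simpl. rewrite <- IHk by lia.
   transitivity (sumR B (fun b => (if Sb pi k b then g b else 0) + 1 * (if Nat.eqb (pi k) b then g b else 0) - 1 * 0)).
   + apply sumR_ext. intros b Hb. unfold Sb at 1. rewrite seq_S, existsb_app. fold (Sb pi k b).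
     simpl. rewrite orb_false_r.
     destruct (Sb pi k b) eqn:E1; destruct (Nat.eqb (pi k) b) eqn:E2; simpl; try ring.
     exfalso. apply Sb_spec in E1. destruct E1 as [i [Hik Hpi]]. apply Nat.eqb_eq in E2.
     assert (i = k) by (apply Hi; lia). lia.
   + rewrite sumR_lin, sumR_zero.
     rewrite sumR_indic by (apply Hr; lia). ring. Qed.

Lemma kmax_spec om pi t n : (kmax om pi t n <= n)%nat /\
  ((kmax om pi t n < n)%nat -> t < prefix_w om pi (S (kmax om pi t n))).
Proof. induction n; simpl. split; [lia|intros; lia].
 destruct (Rle_dec (prefix_w om pi (S n)) t). split; [lia|intros; lia].
 destruct IHn as [H1 H2]. split; [lia|]. intros _.
 destruct (Nat.eq_dec (kmax om pi t n) n). rewrite e; lra. apply H2; lia. Qed.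

Lemma maxR_ge n f b : (b < n)%nat -> f b <= maxR n f.
Proof. induction n; intros; [lia|]. simpl. destruct (Nat.eq_dec b n).
 subst. apply Rmax_r. eapply Rle_trans; [apply IHn; lia| apply Rmax_l]. Qed.

Lemma block_nz_false N blk z b : block_nz N blk z b = false ->
  forall i, (i < N)%nat -> blk i = b -> z i = 0.
Proof. intros H i Hi Hb. destruct (Req_EM_T (z i) 0) as [e|n]; auto. exfalso.
 assert (block_nz N blk z b = true); [|congruence].
 unfold block_nz. apply existsb_exists. exists i. split. apply in_seq; lia.
 rewrite Hb, Nat.eqb_refl. destruct (Req_EM_T (z i) 0); [contradiction|auto]. Qed.

Lemma block_nz_zero N blk b : block_nz N blk (fun _ => 0) b = false.
Proof. destruct (block_nz N blk (fun _ => 0) b) eqn:E; auto.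
 unfold block_nz in E. apply existsb_exists in E. destruct E as [i [_ Hi]].
 destruct (Req_EM_T 0 0); [|lra]. rewrite andb_false_r in Hi. discriminate. Qed.

Lemma mixnorm_nonneg B nrm om p v : 0 <= mixnorm B nrm om p v.
Proof. apply rpow_nonneg. Qed.

Lemma sigma_best_inf N B blk nrm om p s x : 0 <= s ->
  is_inf (fun y => exists z : nat -> R, wl0 N B blk om z <= s /\
      y = mixnorm B nrm om p (vsub x z)) (sigma_best N B blk nrm om p s x).
Proof. intros Hs. unfold sigma_best. apply epsilon_spec.
 set (E := fun y => exists z : nat -> R, wl0 N B blk om z <= s /\
      y = mixnorm B nrm om p (vsub x z)).
 destruct (completeness (fun y => E (- y))) as [l [Hl1 Hl2]].
 - exists 0. intros y [z [_ Hy]]. assert (0 <= - y) by (rewrite Hy; apply mixnorm_nonneg). lra.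
 - exists (- mixnorm B nrm om p (vsub x (fun _ => 0))). exists (fun _ => 0). split; [|lra].
   unfold wl0, omega_set. rewrite (sumR_ext _ _ (fun _ => 0)). rewrite sumR_zero; auto.
   intros b _. rewrite block_nz_zero. auto.
 - exists (- l). split.
   + intros y Hy. assert (- y <= l). apply Hl1. unfold E in *. rewrite Ropp_involutive. auto. lra.
   + intros m' Hm. assert (l <= - m'). apply Hl2. intros y Hy. assert (m' <= - y) by (apply Hm; auto). lra. lra.
Qed.

Theorem mainTheorem2
  (N B : nat) (blk : nat -> nat) (omega : nat -> R)
  (nrm : nat -> (nat -> R) -> R) (p : R) (x : nat -> R) (pi : nat -> nat) (s : R) :
  is_block_partition N B blk ->
  (forall b, (b < B)%nat -> 1 <= omega b) ->
  is_block_norm N B blk nrm ->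
  0 < p -> p <= 2 ->
  is_perm B pi ->
  ratio_sorted B nrm omega x pi ->
  omega_inf B omega ^ 2 <= s ->
  sigma_tilde B blk nrm omega p pi (3 * s) x <= sigma_best N B blk nrm omega p s x.
Proof.
 intros Hpart Hom Hnrm Hp Hp2 [Hpr Hpi] Hsort Hs.
 assert (Hs0 : 0 <= s) by (eapply Rle_trans; [apply pow2_ge_0|exact Hs]).
 destruct (sigma_best_inf N B blk nrm omega p s x Hs0) as [_ Hinf].
 apply Hinf. intros y [z [Hz Hy]]. subst y.
 assert (Hsurj : forall b, (b < B)%nat -> exists j, (j < B)%nat /\ pi j = b).
 { apply bInjective_bSurjective. intros i Hi; apply Hpr; auto. intros i j Hi Hj; apply Hpi; auto. }
 set (k := k_t B omega pi (3 * s)).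
 set (S := Sb pi k).
 set (T := block_nz N blk z).
 set (F := fun b => rpow (omega b) (2 - p) * rpow (nrm b x) p).
 assert (HF0 : forall b, 0 <= F b) by (intros; apply Rmult_le_pos; apply rpow_nonneg).
 assert (HA : sumR B (fun b => rpow (omega b) (2 - p) *
     rpow (nrm b (vsub x (restrict blk (S_t B omega pi (3 * s)) x))) p)
   = sumR B (fun b => if S b then 0 else F b)).
 { apply sumR_ext. intros b Hb. destruct (Hnrm b Hb) as [Hloc [_ [Hz0 _]]].
   change (S_t B omega pi (3 * s)) with S. unfold F.
   destruct (S b) eqn:ESb.
   - replace (nrm b (vsub x (restrict blk S x))) with 0. rewrite rpow_zero; ring.
     symmetry. apply Hz0. intros i Hi Hbi. unfold vsub, restrict. rewrite Hbi, ESb. ring.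
   - f_equal. f_equal. apply Hloc. intros i Hi Hbi. unfold vsub, restrict. rewrite Hbi, ESb. ring. }
 assert (HB : sumR B (fun b => if T b then 0 else F b) <=
    sumR B (fun b => rpow (omega b) (2 - p) * rpow (nrm b (vsub x z)) p)).
 { apply sumR_le. intros b Hb. destruct (Hnrm b Hb) as [Hloc _].
   destruct (T b) eqn:ETb.
   - apply Rmult_le_pos; apply rpow_nonneg.
   - unfold F. right. f_equal. f_equal. apply Hloc. intros i Hi Hbi. unfold vsub.
     rewrite (block_nz_false N blk z b ETb i Hi Hbi). ring. }
 assert (HC : sumR B (fun b => if S b then 0 else F b) <= sumR B (fun b => if T b then 0 else F b)).
 { destruct (kmax_spec omega pi (3 * s) B) as [Hk1 Hk2]. fold (k_t B omega pi (3 * s)) in Hk1, Hk2.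
   fold k in Hk1, Hk2.
   destruct (Nat.eq_dec k B) as [HkB|HkB].
   - apply sumR_le. intros b Hb. replace (S b) with true. destruct (T b); [lra|auto].
     symmetry. apply Sb_spec. destruct (Hsurj b Hb) as [j [Hj Hjb]]. exists j. split; [lia|auto].
   - assert (Hk3 := Hk2 ltac:(lia)). simpl in Hk3. fold (prefix_w omega pi k) in Hk3.
     assert (Hpk : omega (pi k) ^ 2 <= s).
     { eapply Rle_trans; [|exact Hs]. assert (Hpk: (pi k < B)%nat) by (apply Hpr; lia).
       assert (1 <= omega (pi k)) by auto. assert (omega (pi k) <= omega_inf B omega) by (apply maxR_ge; auto).
       apply pow_incr. lra. }
     assert (HwS : omega_set B omega S = prefix_w omega pi k).
     { unfold omega_set, S, prefix_w. apply reindex; auto. }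
     assert (HwT : omega_set B omega T <= s) by exact Hz.
     set (r := fun b => nrm b x / omega b).
     set (m := rpow (r (pi (k - 1)%nat)) p).
     assert (Hm0 : 0 <= m) by apply rpow_nonneg.
     assert (HFd : forall b, (b < B)%nat -> F b = omega b ^ 2 * rpow (r b) p).
     { intros b Hb. unfold F, r. apply rpow_decomp; auto. apply (Hnrm b Hb). }
     assert (Hr0 : forall b, (b < B)%nat -> 0 <= r b).
     { intros b Hb. unfold r. apply Rmult_le_pos. apply (Hnrm b Hb). left; apply Rinv_0_lt_compat.
       assert (1 <= omega b) by auto. lra. }
     assert (HinS : forall b, (b < B)%nat -> S b = true -> m * omega b ^ 2 <= F b).
     { intros b Hb Esb. apply Sb_spec in Esb. destruct Esb as [i [Hi Hib]].
       rewrite HFd by auto. rewrite Rmult_comm. apply Rmult_le_compat_l. apply pow2_ge_0.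
       unfold m. apply rpow_mono. lra. split. apply Hr0; apply Hpr; lia.
       subst b. unfold r. apply Hsort; lia. }
     assert (HnS : forall b, (b < B)%nat -> S b = false -> F b <= m * omega b ^ 2).
     { intros b Hb Esb. destruct (Hsurj b Hb) as [j [Hj Hjb]].
       assert (k <= j)%nat.
       { destruct (Nat.lt_ge_cases j k); auto. assert (S b = true); [|congruence].
         apply Sb_spec. exists j; auto. }
       rewrite HFd by auto. rewrite (Rmult_comm m). apply Rmult_le_compat_l. apply pow2_ge_0.
       unfold m. apply rpow_mono. lra. split. apply Hr0; auto.
       subst b. unfold r. apply Hsort; lia. }
     assert (Hpt : sumR B (fun b => if S b then 0 else F b) <=
        sumR B (fun b => (if T b then 0 else F b) + m * (if T b then omega b ^ 2 else 0)
                       - m * (if S b then omega b ^ 2 else 0))).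
     { apply sumR_le. intros b Hb.
       destruct (S b) eqn:E1; destruct (T b) eqn:E2.
       - lra.
       - assert (H := HinS b Hb E1). lra.
       - assert (H := HnS b Hb E1). lra.
       - lra. }
     rewrite sumR_lin in Hpt. fold (omega_set B omega T) in Hpt. fold (omega_set B omega S) in Hpt.
     assert (m * omega_set B omega T - m * omega_set B omega S <= 0).
     { rewrite <- Rmult_minus_distr_l. assert (prefix_w omega pi (Datatypes.S k) = prefix_w omega pi k + omega (pi k) ^ 2) by reflexivity. assert (0 <= m * (prefix_w omega pi k - omega_set B omega T)) by (apply Rmult_le_pos; lra). rewrite HwS. lra. }
     lra. }
 unfold sigma_tilde, mixnorm. rewrite HA. apply rpow_mono.
 { unfold Rdiv. rewrite Rmult_1_l. left; apply Rinv_0_lt_compat; auto. }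
 split; [|eapply Rle_trans; [exact HC|exact HB]]. eapply Rle_trans; [right; symmetry; apply (sumR_zero B)|]. apply sumR_le. intros b _. destruct (S b); [apply Rle_refl|apply HF0].
Qed.
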